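(* Let $0<\varepsilon_1<\varepsilon_2<1/2$. Then $\varepsilon_1<\phi(\varepsilon_1,\varepsilon_2)<\varepsilon_2$. Furthermore, let $\sigma\in[\varepsilon_1,\varepsilon_2]$ and let $p_1,p_2>0$ with $p_1+p_2\le1$. Then: 1. $(-p_2b_{\sigma,\varepsilon_2},\,p_1b_{\sigma,\varepsilon_1})=\big(-p_2(1-2\varepsilon_2)/(1-2\sigma),\,p_1\varepsilon_1/\sigma\big)$, and for every $x$ in this interval, $0<e_{\sigma,\varepsilon_1,p_1}(-x)<e_{\sigma,\varepsilon_2,p_2}(x)<1/2$. 2. If $\sigma\le\phi(\varepsilon_1,\varepsilon_2)$, then $F_{\sigma,\varepsilon_1,p_1,\varepsilon_2,p_2}$ is (strictly) decreasing on $(-p_2b_{\sigma,\varepsilon_2},0]$. 3. If $\sigma\ge\phi(\varepsilon_1,\varepsilon_2)$, then $F_{\sigma,\varepsilon_1,p_1,\varepsilon_2,p_2}$ is (strictly) increasing on $[0,p_1b_{\sigma,\varepsilon_1})$.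
   Context: Notation: $\overline a=1-a$; $\log$ is base 2. $f_c(t)=1+t\log t+\overline t\log\overline t$ for $t\in[0,1]$ (with $0\log0=0$). For $0<\varepsilon_1<\varepsilon_2<1/2$, $$\phi(\varepsilon_1,\varepsilon_2)=\frac{\ln(\overline{\varepsilon_1}/\overline{\varepsilon_2})}{\ln\big((\overline{\varepsilon_1}\varepsilon_2)/(\overline{\varepsilon_2}\varepsilon_1)\big)}.$$ For $\sigma\in(0,1/2)$ and $\varepsilon\in(0,1/2)$, $b_{\sigma,\varepsilon}=\min\{1,\varepsilon/\sigma,(1-2\varepsilon)/(1-2\sigma)\}$. For $p\in(0,1)$ and $x\in(-pb_{\sigma,\varepsilon},1-p)$, $e_{\sigma,\varepsilon,p}(x)=(p\varepsilon+x\sigma)/(p+x)$ and $f_{\sigma,\varepsilon,p}(x)=(p+x)f_c(e_{\sigma,\varepsilon,p}(x))$. For $\sigma$, $\varepsilon_1<\varepsilon_2$, $p_1,p_2$ as in the claim, $F_{\sigma,\varepsilon_1,p_1,\varepsilon_2,p_2}(x)=f_{\sigma,\varepsilon_1,p_1}(-x)+f_{\sigma,\varepsilon_2,p_2}(x)$ for $x\in(-p_2b_{\sigma,\varepsilon_2},p_1b_{\sigma,\varepsilon_1})$. *)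

(* Defs.v *)
From Stdlib Require Import Reals.
Open Scope R_scope.

Definition log2 (t : R) : R := ln t / ln 2.

Definition xlog2x (t : R) : R := if Req_EM_T t 0 then 0 else t * log2 t.

Definition f_c (t : R) : R := 1 + xlog2x t + xlog2x (1 - t).

Definition phi (e1 e2 : R) : R :=
  ln ((1 - e1) / (1 - e2)) / ln (((1 - e1) * e2) / ((1 - e2) * e1)).

Definition b_se (s e : R) : R := Rmin 1 (Rmin (e / s) ((1 - 2 * e) / (1 - 2 * s))).

Definition e_sep (s e p x : R) : R := (p * e + x * s) / (p + x).

Definition f_sep (s e p x : R) : R := (p + x) * f_c (e_sep s e p x).

Definition F_big (s e1 p1 e2 p2 x : R) : R := f_sep s e1 p1 (- x) + f_sep s e2 p2 x.

(* Main.v *)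
Require Import Defs.
From Stdlib Require Import Reals Lra Psatz.
From Coquelicot Require Import Coquelicot.
Open Scope R_scope.

Lemma ln_div2 x y : 0 < x -> 0 < y -> ln (x / y) = ln x - ln y.
Proof. intros. unfold Rdiv. rewrite ln_mult, ln_Rinv; try lra. apply Rinv_0_lt_compat; lra. Qed.

Lemma ln_gibbs x y : 0 < x -> 0 < y -> x <> y -> 1 - y / x < ln x - ln y.
Proof.
  intros hx hy hxy.
  assert (hq : 0 < y / x) by (apply Rdiv_lt_0_compat; lra).
  assert (ht : ln (y / x) <> 0).
  { intro h. apply hxy.
    assert (h1 : y / x = 1). { rewrite <- (exp_ln (y/x)) by lra. rewrite h, exp_0. reflexivity. }
    apply (f_equal (fun t => t * x)) in h1. field_simplify in h1; lra. }
  pose proof (exp_ineq1 _ ht) as hE. rewrite exp_ln in hE by lra.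
  rewrite ln_div2 in hE by lra. lra.
Qed.

Lemma ln_gibbs_le x y : 0 < x -> 0 < y -> 1 - y / x <= ln x - ln y.
Proof.
  intros hx hy. destruct (Req_dec x y) as [->|h].
  - replace (1 - y/y) with 0 by (field; lra). lra.
  - left. now apply ln_gibbs.
Qed.

Definition Gs (s t : R) : R := s * ln t + (1 - s) * ln (1 - t).

Lemma Gs_inc s a b : 0 < s -> 0 < a -> a < b -> b <= s -> s < 1 -> Gs s a < Gs s b.
Proof.
  intros hs ha hab hbs hs1. unfold Gs.
  pose proof (ln_gibbs b a ltac:(lra) ltac:(lra) ltac:(lra)) as h1.
  pose proof (ln_gibbs_le (1-b) (1-a) ltac:(lra) ltac:(lra)) as h2.
  assert (e1 : 1 - a / b = (b - a) / b) by (field; lra).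
  assert (e2 : 1 - (1 - a) / (1 - b) = (a - b) / (1 - b)) by (field; lra).
  rewrite e1 in h1; rewrite e2 in h2.
  assert (k1 : s * ((b - a) / b) < s * (ln b - ln a)) by (apply Rmult_lt_compat_l; lra).
  assert (k2 : (1 - s) * ((a - b) / (1 - b)) <= (1 - s) * (ln (1 - b) - ln (1 - a)))
    by (apply Rmult_le_compat_l; lra).
  assert (k3 : 0 <= s * ((b - a) / b) + (1 - s) * ((a - b) / (1 - b))).
  { replace (s * ((b - a) / b) + (1 - s) * ((a - b) / (1 - b))) with
      ((b - a) * (s - b) / (b * (1 - b))) by (field; lra).
    apply Rmult_le_pos; [nra| left; apply Rinv_0_lt_compat; nra]. }
  lra.
Qed.

Lemma Gs_dec s a b : 0 < s -> s <= a -> a < b -> b < 1 -> Gs s b < Gs s a.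
Proof.
  intros hs hsa hab hb1. unfold Gs.
  pose proof (ln_gibbs a b ltac:(lra) ltac:(lra) ltac:(lra)) as h1.
  pose proof (ln_gibbs_le (1-a) (1-b) ltac:(lra) ltac:(lra)) as h2.
  assert (e1 : 1 - b / a = (a - b) / a) by (field; lra).
  assert (e2 : 1 - (1 - b) / (1 - a) = (b - a) / (1 - a)) by (field; lra).
  rewrite e1 in h1; rewrite e2 in h2.
  assert (k1 : s * ((a - b) / a) < s * (ln a - ln b)) by (apply Rmult_lt_compat_l; lra).
  assert (k2 : (1 - s) * ((b - a) / (1 - a)) <= (1 - s) * (ln (1 - a) - ln (1 - b)))
    by (apply Rmult_le_compat_l; lra).
  assert (k3 : 0 <= s * ((a - b) / a) + (1 - s) * ((b - a) / (1 - a))).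
  { replace (s * ((a - b) / a) + (1 - s) * ((b - a) / (1 - a))) with
      ((b - a) * (a - s) / (a * (1 - a))) by (field; lra).
    apply Rmult_le_pos; [nra| left; apply Rinv_0_lt_compat; nra]. }
  lra.
Qed.

Lemma Gs_le_inc s a b : 0 < s -> 0 < a -> a <= b -> b <= s -> s < 1 -> Gs s a <= Gs s b.
Proof. intros. destruct (Req_dec a b) as [->|]; [lra|left; apply Gs_inc; lra]. Qed.
Lemma Gs_le_dec s a b : 0 < s -> s <= a -> a <= b -> b < 1 -> Gs s b <= Gs s a.
Proof. intros. destruct (Req_dec a b) as [->|]; [lra|left; apply Gs_dec; lra]. Qed.

Lemma phi_form e1 e2 : 0 < e1 -> e1 < e2 -> e2 < 1 ->
  phi e1 e2 = (ln (1-e1) - ln (1-e2)) / ((ln (1-e1) - ln (1-e2)) + (ln e2 - ln e1)).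
Proof.
  intros. unfold phi. rewrite ln_div2 by lra.
  rewrite ln_div2 by nra. rewrite !ln_mult by lra. f_equal; ring.
Qed.

Lemma phi_bounds e1 e2 : 0 < e1 -> e1 < e2 -> e2 < 1/2 -> e1 < phi e1 e2 < e2.
Proof.
  intros h1 h12 h2. rewrite phi_form by lra.
  assert (hA : 0 < ln (1-e1) - ln (1-e2)) by (pose proof (ln_increasing (1-e2) (1-e1)); lra).
  assert (hB : 0 < ln e2 - ln e1) by (pose proof (ln_increasing e1 e2); lra).
  pose proof (Gs_dec e1 e1 e2 h1 ltac:(lra) h12 ltac:(lra)) as g1.
  pose proof (Gs_inc e2 e1 e2 ltac:(lra) h1 h12 ltac:(lra) ltac:(lra)) as g2.
  unfold Gs in g1, g2.
  split.
  - apply Rmult_lt_reg_r with ((ln (1-e1) - ln (1-e2)) + (ln e2 - ln e1)); [lra|].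
    unfold Rdiv; rewrite Rmult_assoc, Rinv_l by lra. lra.
  - apply Rmult_lt_reg_r with ((ln (1-e1) - ln (1-e2)) + (ln e2 - ln e1)); [lra|].
    unfold Rdiv; rewrite Rmult_assoc, Rinv_l by lra. lra.
Qed.

Definition K (s e p x : R) : R :=
  (p + x) + ((p*e + x*s) * ln (p*e + x*s) + ((p + x) - (p*e + x*s)) * ln ((p + x) - (p*e + x*s))
     - (p + x) * ln (p + x)) / ln 2.

Definition DK (s e p x : R) : R :=
  1 + (s * ln (p*e + x*s) + (1 - s) * ln ((p + x) - (p*e + x*s)) - ln (p + x)) / ln 2.

Lemma ln2_pos : 0 < ln 2.
Proof. pose proof ln_lt_2. lra. Qed.

Lemma fsep_K s e p x : 0 < p + x -> 0 < p*e + x*s -> 0 < (p + x) - (p*e + x*s) ->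
  f_sep s e p x = K s e p x.
Proof.
  intros hP hN hM. pose proof ln2_pos.
  unfold f_sep, f_c, xlog2x, log2, e_sep, K.
  set (N := p*e + x*s) in *. set (P := p + x) in *.
  assert (hu : 0 < N / P) by (apply Rdiv_lt_0_compat; lra).
  assert (h1 : 1 - N / P = (P - N) / P) by (field; lra).
  assert (hv : 0 < 1 - N / P) by (rewrite h1; apply Rdiv_lt_0_compat; lra).
  destruct (Req_EM_T (N / P) 0); [lra|].
  destruct (Req_EM_T (1 - N / P) 0); [lra|].
  rewrite h1, !ln_div2 by lra. field. lra.
Qed.

Lemma K_deriv s e p x : 0 < p + x -> 0 < p*e + x*s -> 0 < (p + x) - (p*e + x*s) ->
  is_derive (K s e p) x (DK s e p x).
Proof.
  intros hP hN hM. pose proof ln2_pos. unfold K, DK.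
  auto_derive.
  - repeat split; lra.
  - unfold Rminus. field. lra.
Qed.

Definition conds (s e p x : R) := 0 < p + x /\ 0 < p*e + x*s /\ 0 < (p + x) - (p*e + x*s).

Lemma DK_Gs s e p x : conds s e p x -> DK s e p x = 1 + Gs s (e_sep s e p x) / ln 2.
Proof.
  intros (hP & hN & hM). pose proof ln2_pos. unfold DK, Gs, e_sep.
  set (N := p*e + x*s) in *. set (P := p + x) in *.
  assert (h1 : 1 - N / P = (P - N) / P) by (field; lra).
  rewrite h1, !ln_div2 by lra. field. lra.
Qed.

Lemma F_deriv s e1 p1 e2 p2 lo hi x : lo < x < hi ->
  (forall y, lo < y < hi -> conds s e1 p1 (- y) /\ conds s e2 p2 y) ->
  is_derive (F_big s e1 p1 e2 p2) x (- DK s e1 p1 (- x) + DK s e2 p2 x).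
Proof.
  intros hx hc.
  apply is_derive_ext_loc with (f := fun y => K s e1 p1 (- y) + K s e2 p2 y).
  - assert (ho : open (fun y => lo < y /\ y < hi)) by (apply open_and; [apply open_gt|apply open_lt]).
    specialize (ho x hx).
    apply (filter_imp (fun y => lo < y /\ y < hi)); [|exact ho].
    intros y hy. destruct (hc y hy) as [(a1&a2&a3) (b1&b2&b3)].
    unfold F_big. rewrite !fsep_K by assumption. reflexivity.
  - destruct (hc x hx) as [(a1&a2&a3) (b1&b2&b3)].
    apply (is_derive_plus (fun y => K s e1 p1 (- y)) (K s e2 p2)).
    + replace (- DK s e1 p1 (- x)) with ((-1) * DK s e1 p1 (- x)) by ring.
      apply (is_derive_comp (K s e1 p1) (fun y => - y)).
      * apply K_deriv; assumption.
      * auto_derive; [exact I| ring].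
    + apply K_deriv; assumption.
Qed.

Lemma lt_div a b c : 0 < c -> a * c < b -> a < b / c.
Proof. intros. apply Rmult_lt_reg_r with c; [lra|]. unfold Rdiv; rewrite Rmult_assoc, Rinv_l; lra. Qed.
Lemma div_lt a b c : 0 < c -> b < a * c -> b / c < a.
Proof. intros. apply Rmult_lt_reg_r with c; [lra|]. unfold Rdiv; rewrite Rmult_assoc, Rinv_l; lra. Qed.
Lemma le_div a b c : 0 < c -> a * c <= b -> a <= b / c.
Proof. intros. apply Rmult_le_reg_r with c; [lra|]. unfold Rdiv; rewrite Rmult_assoc, Rinv_l; lra. Qed.
Lemma div_le a b c : 0 < c -> b <= a * c -> b / c <= a.
Proof. intros. apply Rmult_le_reg_r with c; [lra|]. unfold Rdiv; rewrite Rmult_assoc, Rinv_l; lra. Qed.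
Lemma div_lt_div a b c d : 0 < b -> 0 < d -> a * d < c * b -> a / b < c / d.
Proof.
  intros. apply lt_div; [lra|]. replace (a / b * d) with ((a * d) / b) by (field; lra).
  apply div_lt; lra.
Qed.

Lemma conds_all e1 e2 s p1 p2 y : 0 < e1 -> e1 <= s <= e2 -> e2 < 1/2 -> 0 < p1 -> 0 < p2 ->
  - p2 * (1 - 2 * e2) < y * (1 - 2 * s) -> y * s < p1 * e1 ->
  conds s e1 p1 (- y) /\ conds s e2 p2 y.
Proof.
  intros. unfold conds. repeat split; nra.
Qed.
Lemma le_div_inv a b c : 0 < c -> a <= b / c -> a * c <= b.
Proof. intros hc h. apply Rmult_le_compat_r with (r := c) in h; [|lra].
  replace (b / c * c) with b in h by (field; lra). exact h. Qed.
Lemma div_le_inv a b c : 0 < c -> b / c <= a -> b <= a * c.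
Proof. intros hc h. apply Rmult_le_compat_r with (r := c) in h; [|lra].
  replace (b / c * c) with b in h by (field; lra). exact h. Qed.

Theorem lemma7 (e1 e2 : R) (he1 : 0 < e1) (he12 : e1 < e2) (he2 : e2 < 1/2) :
  (e1 < phi e1 e2 < e2) /\
  (forall (s p1 p2 : R), e1 <= s <= e2 -> 0 < p1 -> 0 < p2 -> p1 + p2 <= 1 ->
     (* 1. *)
     ((- p2 * b_se s e2 = - p2 * (1 - 2 * e2) / (1 - 2 * s) /\
       p1 * b_se s e1 = p1 * e1 / s) /\
      (forall x, - p2 * b_se s e2 < x < p1 * b_se s e1 ->
         0 < e_sep s e1 p1 (- x) /\
         e_sep s e1 p1 (- x) < e_sep s e2 p2 x /\
         e_sep s e2 p2 x < 1/2)) /\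
     (* 2. *)
     (s <= phi e1 e2 ->
        forall x y, - p2 * b_se s e2 < x -> x < y -> y <= 0 ->
          F_big s e1 p1 e2 p2 y < F_big s e1 p1 e2 p2 x) /\
     (* 3. *)
     (phi e1 e2 <= s ->
        forall x y, 0 <= x -> x < y -> y < p1 * b_se s e1 ->
          F_big s e1 p1 e2 p2 x < F_big s e1 p1 e2 p2 y)).
Proof.
  split; [now apply phi_bounds|].
  intros s p1 p2 hs hp1 hp2 hpp.
  pose proof (phi_bounds e1 e2 he1 he12 he2) as hphi.
  assert (hs0 : 0 < s) by lra.
  assert (h12s : 0 < 1 - 2 * s) by lra.
  assert (hb2 : b_se s e2 = (1 - 2 * e2) / (1 - 2 * s)).
  { unfold b_se.
    assert (r1 : (1 - 2 * e2) / (1 - 2 * s) <= 1) by (apply div_le; lra).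
    assert (r2 : 1 <= e2 / s) by (apply le_div; lra).
    rewrite (Rmin_right (e2 / s)) by lra. rewrite Rmin_right by lra. reflexivity. }
  assert (hb1 : b_se s e1 = e1 / s).
  { unfold b_se.
    assert (r1 : 1 <= (1 - 2 * e1) / (1 - 2 * s)) by (apply le_div; lra).
    assert (r2 : e1 / s <= 1) by (apply div_le; lra).
    rewrite (Rmin_left (e1 / s)) by lra. rewrite Rmin_right by lra. reflexivity. }
  rewrite hb1, hb2.
  set (lo := - p2 * ((1 - 2 * e2) / (1 - 2 * s))).
  set (hi := p1 * (e1 / s)).
  assert (clo : forall y, lo < y -> - p2 * (1 - 2 * e2) < y * (1 - 2 * s)).
  { intros y hy. unfold lo in hy.
    replace (- p2 * ((1 - 2 * e2) / (1 - 2 * s))) with ((- p2 * (1 - 2 * e2)) / (1 - 2 * s)) in hy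
      by (field; lra).
    apply Rmult_lt_reg_r with (/ (1 - 2 * s)); [apply Rinv_0_lt_compat; lra|].
    replace (y * (1 - 2 * s) * / (1 - 2 * s)) with y by (field; lra). exact hy. }
  assert (chi : forall y, y < hi -> y * s < p1 * e1).
  { intros y hy. unfold hi in hy.
    replace (p1 * (e1 / s)) with ((p1 * e1) / s) in hy by (field; lra).
    apply Rmult_lt_reg_r with (/ s); [apply Rinv_0_lt_compat; lra|].
    replace (y * s * / s) with y by (field; lra). exact hy. }
  assert (hc : forall y, lo < y < hi -> conds s e1 p1 (- y) /\ conds s e2 p2 y).
  { intros y [h1 h2]. apply conds_all with (e1 := e1) (e2 := e2); auto. }
  assert (hlo : lo < 0).
  { unfold lo. assert (0 < (1 - 2 * e2) / (1 - 2 * s)) by (apply Rdiv_lt_0_compat; lra). nra. }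
  assert (hhi : 0 < hi).
  { unfold hi. assert (0 < e1 / s) by (apply Rdiv_lt_0_compat; lra). nra. }
  pose proof ln2_pos as hl2.
  assert (hD : forall c, lo < c < hi ->
     - DK s e1 p1 (- c) + DK s e2 p2 c =
     (Gs s (e_sep s e2 p2 c) - Gs s (e_sep s e1 p1 (- c))) / ln 2).
  { intros c hcc. destruct (hc c hcc) as [k1 k2]. rewrite !DK_Gs by assumption. field. lra. }
  assert (hG : Gs s e2 - Gs s e1 = s * ((ln (1-e1) - ln (1-e2)) + (ln e2 - ln e1)) - (ln (1-e1) - ln (1-e2))).
  { unfold Gs. ring. }
  assert (hA : 0 < ln (1-e1) - ln (1-e2)) by (pose proof (ln_increasing (1-e2) (1-e1)); lra).
  assert (hB : 0 < ln e2 - ln e1) by (pose proof (ln_increasing e1 e2); lra).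
  split; [|split].
  - split.
    + split; [unfold lo; field; lra | unfold hi; field; lra].
    + intros x hx. destruct (hc x hx) as [(a1&a2&a3) (b1&b2&b3)].
      pose proof (clo x (proj1 hx)). unfold e_sep. split; [|split].
      * apply Rdiv_lt_0_compat; lra.
      * apply div_lt_div; try lra.
        destruct (Req_dec s e1) as [<-|hne].
        -- assert (0 < p2 * (e2 - s) * (p1 + - x)) by (apply Rmult_lt_0_compat; [nra|lra]). nra.
        -- assert (0 < p1 * (s - e1) * (p2 + x)) by (apply Rmult_lt_0_compat; [nra|lra]).
           assert (0 <= p2 * (e2 - s) * (p1 + - x)) by (apply Rmult_le_pos; [nra|lra]). nra.
      * apply div_lt; lra.
  - intros hsp x y hx hxy hy.
    assert (hse2 : s < e2) by lra.
    rewrite phi_form in hsp by lra.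
    apply le_div_inv in hsp; [|lra].
    destruct (MVT_cor2 (F_big s e1 p1 e2 p2) (fun c => - DK s e1 p1 (- c) + DK s e2 p2 c) x y hxy)
      as (c & hcE & hcI).
    { intros c hc'. apply is_derive_Reals. apply F_deriv with lo hi; [lra|exact hc]. }
    assert (hcc : lo < c < hi) by lra.
    rewrite hD in hcE by exact hcc.
    destruct (hc c hcc) as [(a1&a2&a3) (b1&b2&b3)].
    assert (g1 : Gs s (e_sep s e2 p2 c) < Gs s e2).
    { apply Gs_dec; try lra; unfold e_sep.
      - apply lt_div; nra.
      - apply div_lt; lra. }
    assert (g2 : Gs s e1 <= Gs s (e_sep s e1 p1 (- c))).
    { apply Gs_le_inc; try lra; unfold e_sep.
      - apply le_div; nra.
      - apply div_le; nra. }
    assert (hneg : (Gs s (e_sep s e2 p2 c) - Gs s (e_sep s e1 p1 (- c))) / ln 2 < 0).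
    { apply div_lt; lra. }
    nra.
  - intros hsp x y hx hxy hy.
    assert (hse1 : e1 < s) by lra.
    rewrite phi_form in hsp by lra.
    apply div_le_inv in hsp; [|lra].
    destruct (MVT_cor2 (F_big s e1 p1 e2 p2) (fun c => - DK s e1 p1 (- c) + DK s e2 p2 c) x y hxy)
      as (c & hcE & hcI).
    { intros c hc'. apply is_derive_Reals. apply F_deriv with lo hi; [lra|exact hc]. }
    assert (hcc : lo < c < hi) by lra.
    rewrite hD in hcE by exact hcc.
    destruct (hc c hcc) as [(a1&a2&a3) (b1&b2&b3)].
    assert (g1 : Gs s (e_sep s e1 p1 (- c)) < Gs s e1).
    { apply Gs_inc; try lra; unfold e_sep.
      - apply Rdiv_lt_0_compat; lra.
      - apply div_lt; nra. }
    assert (g2 : Gs s e2 <= Gs s (e_sep s e2 p2 c)).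
    { apply Gs_le_dec; try lra; unfold e_sep.
      - apply le_div; nra.
      - apply div_le; nra. }
    assert (hpos : 0 < (Gs s (e_sep s e2 p2 c) - Gs s (e_sep s e1 p1 (- c))) / ln 2).
    { apply lt_div; lra. }
    nra.
Qed.
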